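(* Let $a,b\in\mathbb F_{q^2}^*$, let $j_1,i_2,j_2$ be integers with $0<j_1<d$, $0<i_2<(q+1)/d$, $0\le j_2<d$, and assume $1+a\epsilon^{j_1k}\ne0$ for all $0\le k<d$. For $0\le k<d$ put $L_k(X)=1+a\epsilon^{j_1k}+b\epsilon^{j_2k}X^{i_2}$. (i) If for some $0\le k<d$ there is $\lambda_k\in\mu_{q+1}$ with $L_k\in\mathcal L_k(i_2,0;\lambda_k)$, then $\lambda_k=(1+a\epsilon^{j_1k})^q/(b\epsilon^{j_2k})$, there is an integer $\alpha(k)$ with $\bigl((1+a^q\epsilon^{-j_1k})/b\bigr)^{(q+1)/d}=\epsilon^{\alpha(k)}$, and $\lambda_k^{(q+1)/d}=\epsilon^{-j_2k(q+1)/d+\alpha(k)}$. (ii) If for every $0\le k<d$ there is $\lambda_k\in\mu_{q+1}$ with $L_k\in\mathcal L_k(i_2,0;\lambda_k)$, then $d$ is even, $j_1=d/2$, $a^{q-1}=-1$ and $(1-a)/b\in\mu_{q+1}$; moreover $((1+a)/(1-a))^{q+1}=1$, and if $u,v\in\mathbb Z/d\mathbb Z$ are defined by $((1-a)/b)^{(q+1)/d}=\epsilon^u$ and $((1+a)/(1-a))^{(q+1)/d}=\epsilon^v$, and $\pi(k)\in\mathbb Z/d\mathbb Z$ by $\lambda_k^{(q+1)/d}=\epsilon^{\pi(k)}$, then for all $k\in\mathbb Z/d\mathbb Z$ $$\pi(k)+(r-i_2)k=\Bigl(-j_2\frac{q+1}{d}+r-i_2\Bigr)k+\delta(k)v+u,$$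 for every integer $r$, where $\delta(k)=0$ if $k$ is even and $\delta(k)=1$ if $k$ is odd.
   Context: $q$ is a prime power, $d$ is a positive divisor of $q+1$, and $\epsilon\in\mathbb F_{q^2}^*$ has multiplicative order $d$. $\mu_{q+1}$ is the subgroup of order $q+1$ of $\mathbb F_{q^2}^*$. For $a\in\mathbb F_{q^2}$, $\bar a=a^q$; for $f(X)=\sum_{i=0}^n a_iX^i\in\mathbb F_{q^2}[X]$ with $a_n\neq0$, $\tilde f(X)=\sum_{i=0}^n\bar a_iX^{n-i}$. For $0\le k<d$, $0\le t<(q+1)/d$ and $\lambda\in\mu_{q+1}$, $\mathcal L_k(t,0;\lambda)$ is the set of $L\in\mathbb F_{q^2}[X]$ with $\deg L=t$, $\tilde L=\lambda L$ and $\gcd(L,X^{(q+1)/d}-\epsilon^k)=1$. *)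

(* Defs.v *)
From HB Require Import structures.
From mathcomp Require Import all_boot all_order all_algebra.
Set Implicit Arguments. Unset Strict Implicit. Unset Printing Implicit Defensive.
Import Order.TTheory GRing.Theory Num.Theory.
Local Open Scope ring_scope.

Definition mu {F : fieldType} (q : nat) (x : F) : bool := x ^+ q.+1 == 1.

(* tilde f = sum_i conj(a_i) X^(n-i), with n = deg f and conj a = a^q. *)
Definition tilde {F : fieldType} (q : nat) (f : {poly F}) : {poly F} :=
  \poly_(i < size f) ((f`_((size f).-1 - i)) ^+ q).

Definition calL {F : fieldType} (q d : nat) (eps : F) (k t : nat) (lam : F)
  (L : {poly F}) : Prop :=
  [/\ size L = t.+1, tilde q L = lam *: L
    & coprimep L ('X^((q + 1) %/ d) - (eps ^+ k)%:P)].

Definition Lk {F : fieldType} (a b eps : F) (j1 i2 j2 k : nat) : {poly F} :=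
  (1 + a * eps ^+ (j1 * k))%:P + (b * eps ^+ (j2 * k)) *: 'X^i2.

(* Main.v *)
Require Import Defs.
From HB Require Import structures.
From mathcomp Require Import all_boot all_order all_algebra all_field.
From mathcomp Require Import ring lra zify.
Import Order.TTheory GRing.Theory Num.Theory.
Local Open Scope ring_scope.

Lemma zexp_mod (F : fieldType) (d : nat) (eps : F) (x y : int) :
  d.-primitive_root eps -> eps ^ x = eps ^ y -> (x = y %[mod d%:Z])%Z.
Proof.
move=> pr exy.
have d0 : (0 < d)%N := prim_order_gt0 pr.
have e0 : eps != 0.
  apply/negP=> /eqP e0; move: (prim_expr_order pr); rewrite e0 expr0n eqn0Ngt d0 /=.
  by move/eqP; rewrite eq_sym oner_eq0.
have h1 : eps ^ (x - y) = 1 by rewrite expfzDr // exy -exprz_inv -expfV mulfV // expfz_neq0.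
apply/eqP; rewrite eqz_mod_dvd; apply/dvdz_mod0P.
have dz : d%:Z != 0 by rewrite eqz_nat -lt0n.
move: h1; rewrite {1}(divz_eq (x - y) d) expfzDr // mulrC -exprz_exp.
have ed : eps ^ (d%:Z) = 1 by rewrite -exprnP prim_expr_order.
rewrite exprzAC ed exp1rz mulr1.
have dp : 0 < d%:Z by rewrite ltz_nat.
have := modz_ge0 (x - y) dz; have := ltz_pmod (x - y) dp.
case: ((x - y) %% d)%Z => [n|n] //= ltn _.
rewrite -exprnP => /eqP; rewrite -(prim_order_dvd pr) => dn.
rewrite ltz_nat in ltn.
case: n dn ltn => // n /dvdn_leq le ltn. by have := leq_ltn_trans (le isT) ltn; rewrite ltnn.
Qed.
Lemma frobD (F : finFieldType) (p n q : nat) (x y : F) :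
  prime p -> q = (p ^ n)%N -> #|F| = (q ^ 2)%N -> (x + y) ^+ q = x ^+ q + y ^+ q.
Proof.
move=> pp qE cF.
have pc : p \in [pchar F].
  by apply: (card_finPcharP (n := (n * 2)%N)) => //; rewrite cF qE expnM.
apply: exprDn_pchar; rewrite qE pnatX (eq_pnat _ (pcharf_eq pc)) pnat_id //.
Qed.

Lemma calL_coef (F : fieldType) (q d : nat) (eps : F) (k i2 : nat) (lam c e : F) :
  e != 0 -> (0 < i2)%N -> calL q d eps k i2 lam (c%:P + e *: 'X^i2) ->
  c ^+ q = lam * e /\ e ^+ q = lam * c.
Proof.
move=> e0 i0 [sz tl _].
have cf := congr1 (fun P : {poly F} => P`_i2) tl.
have cf0 := congr1 (fun P : {poly F} => P`_0) tl.
move: cf cf0; rewrite /tilde sz !coef_poly !coefZ !coefD !coefC !coefZ !coefXn.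
have i2n : (i2 == 0%N) = false by rewrite eqn0Ngt i0.
have i2n' : (0%N == i2) = false by rewrite eq_sym i2n.
rewrite ltnSn subnn /= eqxx subn0 i2n i2n' eqxx.
by rewrite !mulr0 !mulr1 !addr0 !add0r => -> ->.
Qed.

Lemma key2 (F : fieldType) (A Aq w : F) : w != 0 ->
  (1 + Aq * w^-1) * (1 + A * w) = (1 + Aq) * (1 + A) -> w = 1 \/ A * w = Aq.
Proof.
move=> w0 h.
have : (w - 1) * (A * w - Aq) = 0.
  have -> : (w - 1) * (A * w - Aq) = w * ((1 + Aq * w^-1) * (1 + A * w) - (1 + Aq) * (1 + A)).
    by field.
  by rewrite h subrr mulr0.
by move/eqP; rewrite mulf_eq0 !subr_eq0 => /orP[] /eqP; [left|right].
Qed.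

Lemma rootpow (F : fieldType) (d m q : nat) (eps x : F) :
  d.-primitive_root eps -> (m * d)%N = q.+1 -> x ^+ q.+1 = 1 ->
  exists i : nat, x ^+ m = eps ^+ i.
Proof.
move=> pr md xq.
have : (x ^+ m) ^+ d = 1 by rewrite -exprM md.
by case/(prim_rootP pr) => i ->; exists i.
Qed.
Arguments calL_coef {F q d eps k i2 lam c e}.
Arguments rootpow {F d m q eps x}.
Arguments zexp_mod {F d eps x y}.

Theorem lemma4p1 (F : finFieldType) (p n q d : nat) (eps a b : F)
  (j1 i2 j2 : nat) :
  prime p -> (0 < n)%N -> q = (p ^ n)%N -> #|F| = (q ^ 2)%N ->
  (0 < d)%N -> (d %| q + 1)%N -> d.-primitive_root eps ->
  a != 0 -> b != 0 ->
  (0 < j1 < d)%N -> (0 < i2 < (q + 1) %/ d)%N -> (j2 < d)%N ->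
  (forall k, (k < d)%N -> 1 + a * eps ^+ (j1 * k) != 0) ->
  (* (i) *)
  (forall (k : nat) (lam : F), (k < d)%N -> mu q lam ->
     calL q d eps k i2 lam (Lk a b eps j1 i2 j2 k) ->
     lam = (1 + a * eps ^+ (j1 * k)) ^+ q / (b * eps ^+ (j2 * k)) /\
     exists alpha : int,
       ((1 + a ^+ q * eps ^- (j1 * k)) / b) ^+ ((q + 1) %/ d) = eps ^ alpha /\
       lam ^+ ((q + 1) %/ d) = eps ^ (- ((j2 * k * ((q + 1) %/ d))%N%:Z) + alpha))
  /\
  (* (ii) *)
  (forall lam : nat -> F,
     (forall k, (k < d)%N ->
        mu q (lam k) /\ calL q d eps k i2 (lam k) (Lk a b eps j1 i2 j2 k)) ->
     [/\ ~~ odd d, j1 = (d %/ 2)%N, a ^+ (q - 1) = -1 & mu q ((1 - a) / b)] /\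
     [/\ ((1 + a) / (1 - a)) ^+ q.+1 = 1,
         (exists u : int, ((1 - a) / b) ^+ ((q + 1) %/ d) = eps ^ u),
         (exists v : int, ((1 + a) / (1 - a)) ^+ ((q + 1) %/ d) = eps ^ v)
       & forall (u v : int) (pi : nat -> int),
           ((1 - a) / b) ^+ ((q + 1) %/ d) = eps ^ u ->
           ((1 + a) / (1 - a)) ^+ ((q + 1) %/ d) = eps ^ v ->
           (forall k, (k < d)%N -> lam k ^+ ((q + 1) %/ d) = eps ^ pi k) ->
           forall (r : int) (k : nat), (k < d)%N ->
             (pi k + (r - i2%:Z) * k%:Z
              = (- ((j2 * ((q + 1) %/ d))%N%:Z) + r - i2%:Z) * k%:Z
                + (odd k)%:Z * v + u %[mod d%:Z])%Z]).
Proof.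
Proof.
move=> pp n0 qE cF d0 dq pr a0 b0 /andP[j10 j1d] /andP[i20 i2m] j2d hc.
set m := ((q + 1) %/ d)%N.
have md : (m * d)%N = q.+1 by rewrite divnK // addn1.
have q0 : (0 < q)%N by rewrite qE expn_gt0 prime_gt0.
have e0 : eps != 0.
  apply/negP=> /eqP e0; move: (prim_expr_order pr); rewrite e0 expr0n eqn0Ngt d0 /=.
  by move/eqP; rewrite eq_sym oner_eq0.
have eq1 : eps ^+ q.+1 = 1.
  by rewrite -md mulnC exprM (prim_expr_order pr) expr1n.
have epsq : eps ^+ q = eps^-1.
  by rewrite -[eps ^+ q]mulr1 -(mulfV e0) mulrA -exprSr eq1 mul1r.
have frob : forall x y : F, (x + y) ^+ q = x ^+ q + y ^+ q.
  by move=> x y; exact: frobD pp qE cF.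
have cq : forall k, (1 + a * eps ^+ (j1 * k)) ^+ q = 1 + a ^+ q * eps ^- (j1 * k).
  move=> k; rewrite frob expr1n exprMn -exprM (mulnC _ q) exprM epsq exprVn //.
have ek0 : forall k, b * eps ^+ (j2 * k) != 0.
  by move=> k; rewrite mulf_neq0 // expf_neq0.
split.
  move=> k lam kd mul cl.
  have [h1 h2] := calL_coef (ek0 k) i20 cl.
  have lamE : lam = (1 + a * eps ^+ (j1 * k)) ^+ q / (b * eps ^+ (j2 * k)).
    by rewrite h1 mulfK // ek0.
  split => //.
  have [i hi] := rootpow pr md (eqP mul).
  exists (i + j2 * k * m)%N; split.
    rewrite -cq h1.
    have -> : lam * (b * eps ^+ (j2 * k)) / b = lam * eps ^+ (j2 * k) by field.
    by rewrite exprMn hi -exprM -exprD.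
  by rewrite PoszD addrCA addNr addr0 hi.
move=> lam H.
have HN : forall k, (k < d)%N -> (1 + a * eps ^+ (j1 * k)) ^+ q.+1 = b ^+ q.+1.
  move=> k kd; have [mu1 cl] := H k kd; have [h1 h2] := calL_coef (ek0 k) i20 cl.
  have -> : (1 + a * eps ^+ (j1 * k)) ^+ q.+1 = (b * eps ^+ (j2 * k)) ^+ q.+1.
    by rewrite !exprSr h1 h2 mulrAC.
  by rewrite exprMn -exprM mulnC exprM eq1 expr1n mulr1.
have d1 : (1 < d)%N by apply: leq_ltn_trans j1d.
have N0 : (1 + a) ^+ q.+1 = b ^+ q.+1 by have := HN 0%N d0; rewrite muln0 expr0 mulr1.
have kk : forall k, (k < d)%N -> eps ^+ (j1 * k) = 1 \/ a * eps ^+ (j1 * k) = a ^+ q.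
  move=> k kd; apply: key2; first by rewrite expf_neq0.
  by rewrite -cq -exprSr HN // -N0 exprSr frob expr1n.
have w1n1 : eps ^+ j1 != 1.
  by rewrite -(prim_order_dvd pr); apply/negP => /(dvdn_leq j10); rewrite leqNgt j1d.
have aw1 : a * eps ^+ j1 = a ^+ q.
  by case: (kk 1%N d1); rewrite muln1 // => h; rewrite h eqxx in w1n1.
have w2 : eps ^+ (j1 * 2) = 1.
  case: (ltnP 2 d) => [d2|d2].
    case: (kk 2%N d2) => // h; exfalso.
    move: h; rewrite -aw1 => /(mulfI a0); rewrite exprM expr2 -{3}[eps ^+ j1]mul1r.
    by move/(mulIf (expf_neq0 j1 e0)) => h; rewrite h eqxx in w1n1.
  have -> : (j1 * 2 = d)%N by lia.
  exact: prim_expr_order pr.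
have hd : (j1 * 2 = d)%N.
  move/eqP: w2; rewrite -(prim_order_dvd pr) => /dvdnP [t ht].
  case: t ht => [|[|t]] ht; [lia | lia | nia].
have w1m : eps ^+ j1 = -1.
  have : (eps ^+ j1) ^+ 2 == 1 by rewrite -exprM w2.
  by rewrite sqrf_eq1 (negbTE w1n1) => /eqP.
have aq : a ^+ q = - a by rewrite -aw1 w1m mulrN1.
have c1 : 1 + a * eps ^+ (j1 * 1) = 1 - a by rewrite muln1 w1m mulrN1.
have N1 : (1 - a) ^+ q.+1 = b ^+ q.+1 by rewrite -c1 HN.
have a1 : 1 - a != 0 by rewrite -c1; apply: hc.
split.
  split.
  - by rewrite -hd oddM andbF.
  - by rewrite -hd mulnK.
  - by apply: (mulIf a0); rewrite -exprSr subn1 prednK // aq mulN1r.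
  - by rewrite /mu expr_div_n N1 divff // expf_neq0.
have mu1 : ((1 - a) / b) ^+ q.+1 = 1 by rewrite expr_div_n N1 divff // expf_neq0.
have mu2 : ((1 + a) / (1 - a)) ^+ q.+1 = 1 by rewrite expr_div_n N0 -N1 divff // expf_neq0.
split => //.
- by have [i hi] := rootpow pr md mu1; exists i.
- by have [i hi] := rootpow pr md mu2; exists i.
move=> u v pi hu hv hpi r k kd.
have [_ cl] := H k kd; have [h1 _] := calL_coef (ek0 k) i20 cl.
have cqk : (1 + a * eps ^+ (j1 * k)) ^+ q = if odd k then 1 + a else 1 - a.
  rewrite cq aq exprM w1m -signr_odd.
  by case: (odd k) => /=; rewrite ?expr0 ?expr1 ?invr1 ?invrN1 ?mulrN1 ?opprK ?mulr1.
have E1 : lam k ^+ m * eps ^+ (j2 * k * m) * b ^+ m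
          = eps ^ (u + (odd k)%:Z * v) * b ^+ m.
  have -> : lam k ^+ m * eps ^+ (j2 * k * m) * b ^+ m
            = (lam k * (b * eps ^+ (j2 * k))) ^+ m.
    by rewrite [eps ^+ (j2 * k * m)]exprM !exprMn; ring.
  rewrite -h1 cqk; case: (odd k) => /=.
    have -> : 1 + a = (1 + a) / (1 - a) * ((1 - a) / b) * b.
      by field; rewrite b0 a1.
    by rewrite exprMn exprMn hv hu mul1r expfzDr // (mulrC (eps ^ u)).
  have -> : 1 - a = ((1 - a) / b) * b by rewrite divfK.
  by rewrite exprMn hu mul0r addr0.
have E2 := mulIf (expf_neq0 m b0) E1.
have E3 : eps ^ (pi k + (j2 * m)%N%:Z * k%:Z) = eps ^ (u + (odd k)%:Z * v).
  rewrite expfzDr // -PoszM -exprnP mulnAC -(hpi k kd); exact: E2.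
have Hk := zexp_mod pr E3.
have -> : pi k + (r - i2%:Z) * k%:Z
  = (pi k + (j2 * m)%N%:Z * k%:Z) + (- (j2 * m)%N%:Z * k%:Z + (r - i2%:Z) * k%:Z)
  by ring.
have -> : (- (j2 * m)%N%:Z + r - i2%:Z) * k%:Z + (odd k)%:Z * v + u
  = (u + (odd k)%:Z * v) + (- (j2 * m)%N%:Z * k%:Z + (r - i2%:Z) * k%:Z)
  by ring.
by rewrite -modzDml Hk modzDml.
Qed.
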